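(* Let $X=\{0,1,2,3\}$ and let $a,b,c$ be the transformations of $X^\ast$ defined recursively (with $\emptyset\mapsto\emptyset$) by $a(0w)=1\,a(w)$, $a(1w)=0w$, $a(2w)=2w$, $a(3w)=3w$; $b(0w)=2\,b(w)$, $b(2w)=0w$, $b(1w)=1w$, $b(3w)=3w$; $c(0w)=3\,c(w)$, $c(3w)=0w$, $c(1w)=1w$, $c(2w)=2w$. For $n\ge1$ let $A_n=a_n+a_n^{-1}+b_n+b_n^{-1}+c_n+c_n^{-1}$, where $a_n,b_n,c_n$ are the permutation matrices of $a,b,c$ on $X^n$, let $P_n(\lambda)=\det(\lambda I-A_n)$ and $f(\lambda)=\lambda^2-4\lambda-6$, with $f^{\circ i}$ the $i$-fold iterate ($f^{\circ 0}=\mathrm{id}$). Then for every $n\ge1$ $$P_n(\lambda)=(\lambda-6)\prod_{i=0}^{n-1}\bigl(f^{\circ i}(\lambda)+2\bigr)\prod_{i=0}^{n-1}\bigl(f^{\circ i}(\lambda)-4\bigr)^{2\cdot 4^{\,n-i-1}}.$$ In particular, the spectrum of $A_n$ (as a multiset) is the disjoint union of $\{6\}$, the sets $f^{-i}(-2)$ for $i=0,\dots,n-1$ (each element with multiplicity one), and the sets $f^{-i}(4)$ for $i=0,\dots,n-1$, each element of $f^{-i}(4)$ counted with multiplicity $2\cdot 4^{n-i-1}$.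
   Context: $f^{-i}(x)$ denotes the set of $\lambda\in\mathbb{C}$ with $f^{\circ i}(\lambda)=x$. $A_n$ is the adjacency matrix of the $n$-th Schreier graph of the group generated by $a,b,c$. *)

(* Defs.v *)
From HB Require Import structures.
From mathcomp Require Import all_boot all_order all_algebra all_field.
Set Implicit Arguments. Unset Strict Implicit. Unset Printing Implicit Defensive.
Import Order.TTheory GRing.Theory Num.Theory.
Local Open Scope ring_scope.

Definition x0 : 'I_4 := @Ordinal 4 0 isT.
Definition x1 : 'I_4 := @Ordinal 4 1 isT.
Definition x2 : 'I_4 := @Ordinal 4 2 isT.
Definition x3 : 'I_4 := @Ordinal 4 3 isT.

Fixpoint gen (k : 'I_4) (w : seq 'I_4) : seq 'I_4 :=
  match w with
  | [::] => [::]
  | x :: w' => if x == x0 then k :: gen k w'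
               else if x == k then x0 :: w'
               else x :: w'
  end.

Definition aw := gen x1.
Definition bw := gen x2.
Definition cw := gen x3.

Definition N (n : nat) : nat := #|{: n.-tuple 'I_4}|.

Definition permM (g : seq 'I_4 -> seq 'I_4) (n : nat) : 'M[int]_(N n) :=
  \matrix_(i, j) ((g (val (enum_val i : n.-tuple 'I_4))
                   == val (enum_val j : n.-tuple 'I_4)) %:R : int).

Definition A (n : nat) : 'M[int]_(N n) :=
  permM aw n + invmx (permM aw n) + permM bw n + invmx (permM bw n)
  + permM cw n + invmx (permM cw n).

Definition P (n : nat) : {poly int} := char_poly (A n).

Definition f : {poly int} := 'X^2 - 4%:P * 'X - 6%:P.
Definition fiter (i : nat) : {poly int} := iter i (fun p => f \Po p) 'X.

(* Main.v *)
Require Import Defs.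
From HB Require Import structures.
From mathcomp Require Import all_boot all_order all_algebra all_field.
From mathcomp Require Import fingroup perm ring zify.
Set Implicit Arguments. Unset Strict Implicit. Unset Printing Implicit Defensive.
Import Order.TTheory GRing.Theory Num.Theory.
Local Open Scope ring_scope.

Lemma size_gen k w : size (gen k w) = size w.
Proof. elim: w => //= x w IH; case: ifP => _ /=; first by rewrite IH. by case: ifP. Qed.

Lemma gen_inj k : k != x0 -> injective (gen k).
Proof.
move=> k0 u; elim: u => [|x u IH] [|y v] //=.
- by case: (y == x0) => //; case: (y == k).
- by case: (x == x0) => //; case: (x == k).
case: (eqVneq x x0) => [->|hx]; case: (eqVneq y x0) => [->|hy] //=.
- by case=> /IH ->.
- case: (eqVneq y k) => [->|hyk] [].
  + by move=> /eqP; rewrite (negbTE k0).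
  + by move=> e; rewrite e eqxx in hyk.
- case: (eqVneq x k) => [->|hxk] [].
  + by move=> /eqP; rewrite eq_sym (negbTE k0).
  + by move=> e; rewrite e eqxx in hxk.
- case: (eqVneq x k) => [->|hxk]; case: (eqVneq y k) => [->|hyk] //.
  + by case=> ->.
  + by case=> e; rewrite -e eqxx in hy.
  + by case=> e; rewrite e eqxx in hx.
Qed.

Lemma det_reindex (R : comNzRingType) (T : finType) (M : T -> T -> R) p q
  (epq : p = q) (e1 : 'I_p -> T) (e2 : 'I_q -> T) :
  p = #|T| -> injective e1 -> injective e2 ->
  \det (\matrix_(i, j) M (e1 i) (e1 j)) = \det (\matrix_(i, j) M (e2 i) (e2 j)).
Proof.
subst q => hp i1 i2.
have [e1' K1 K2] : bijective e1 by apply: inj_card_bij => //; rewrite card_ord hp.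
have si : injective (e1' \o e2) by move=> i j /= /(congr1 e1); rewrite !K2 => /i2.
pose s := perm.perm si.
have -> : \matrix_(i, j) M (e2 i) (e2 j)
   = row_perm s (col_perm s (\matrix_(i, j) M (e1 i) (e1 j))).
  by apply/matrixP => i j; rewrite !mxE !perm.permE /= !K2.
rewrite row_permE col_permE !det_mulmx mulrCA -det_mulmx -perm_mxM mulgV perm_mx1 det1.
by rewrite mulr1.
Qed.

Lemma gt_proof k n (u : n.-tuple 'I_4) : size (gen k u) == n.
Proof. by rewrite size_gen size_tuple. Qed.
Definition gt k n (u : n.-tuple 'I_4) : n.-tuple 'I_4 := Tuple (gt_proof k u).
Lemma gt_inj k n : k != x0 -> injective (@gt k n).
Proof. by move=> k0 u v /(congr1 val) /= /(gen_inj k0) /val_inj. Qed.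
Lemma gtE k n (u v : n.-tuple 'I_4) : (gen k (val u) == val v) = (gt k u == v).
Proof. by []. Qed.

Lemma sum_delta (R : nzRingType) (T : finType) (t : T) (F : T -> R) :
  \sum_(w : T) (t == w)%:R * F w = F t.
Proof.
rewrite (bigD1 t) //= eqxx mul1r big1 ?addr0 // => w /negbTE.
by rewrite eq_sym => ->; rewrite mul0r.
Qed.

Lemma sum_ev (R : nzRingType) n (F : n.-tuple 'I_4 -> R) :
  \sum_(l < N n) F (enum_val l) = \sum_w F w.
Proof. by rewrite -(big_enum_val F); apply: eq_bigl. Qed.

Lemma permM_mul n k : k != x0 -> Defs.permM (gen k) n *m (Defs.permM (gen k) n)^T = 1%:M.
Proof.
move=> k0; apply/matrixP => i j; rewrite !mxE.
under eq_bigr => l _ do rewrite !mxE !gtE.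
rewrite (sum_ev (fun w => (gt k (enum_val i) == w)%:R * (gt k (enum_val j) == w)%:R)).
rewrite sum_delta eq_sym (inj_eq (gt_inj k0)) (inj_eq enum_val_inj).
by [].
Qed.

Lemma invmx_permM n k : k != x0 -> invmx (Defs.permM (gen k) n) = (Defs.permM (gen k) n)^T.
Proof.
move=> k0; have h := permM_mul n k0; have [u _] := mulmx1_unit h.
by rewrite -[RHS]mul1mx -(mulVmx u) -mulmxA h mulmx1.
Qed.

Definition Adj (u v : seq 'I_4) : int :=
  (gen x1 u == v)%:R + (gen x1 v == u)%:R + (gen x2 u == v)%:R + (gen x2 v == u)%:R
  + (gen x3 u == v)%:R + (gen x3 v == u)%:R.

Lemma AE n : A n = \matrix_(i, j) Adj (val (enum_val i)) (val (enum_val j)).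
Proof.
rewrite /A /aw /bw /cw !invmx_permM //.
by apply/matrixP => i j; rewrite !mxE.
Qed.

Lemma schur (R : comNzRingType) m k (l d : R) (B : 'M[R]_(m, k)) :
  \det (block_mx l%:M (- B) (- B^T) d%:M) * d ^+ m
  = \det ((l * d)%:M - B *m B^T) * d ^+ k.
Proof.
have := det_mulmx (block_mx l%:M (- B) (- B^T) d%:M) (block_mx d%:M 0 B^T 1%:M).
rewrite mulmx_block !mulmx0 !mulmx1 !add0r.
have -> : - B^T *m d%:M + d%:M *m B^T = 0.
  by rewrite mulNmx mul_mx_scalar mul_scalar_mx addNr.
rewrite -scalar_mxM det_ublock det_lblock !det_scalar expr1n mulr1.
by move=> <-; rewrite mulNmx.
Qed.

Lemma Adj00 u v : Adj (x0 :: u) (x0 :: v) = 0.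
Proof. by rewrite /Adj /=. Qed.

Lemma lift0 (H : (0 < 3)%N) : lift x0 (Ordinal H) = x1. Proof. by apply/val_inj. Qed.
Lemma lift1 (H : (1 < 3)%N) : lift x0 (Ordinal H) = x2. Proof. by apply/val_inj. Qed.
Lemma lift2 (H : (2 < 3)%N) : lift x0 (Ordinal H) = x3. Proof. by apply/val_inj. Qed.

Ltac caseI3 x := case: x => [[|[|[|//]]] ?]; rewrite ?lift0 ?lift1 ?lift2.

Lemma Adj0l (x : 'I_3) u v :
  Adj (x0 :: u) (lift x0 x :: v) = (gen (lift x0 x) u == v)%:R + (u == v)%:R.
Proof.
by caseI3 x; rewrite /Adj /= !eqseq_cons /= ?addr0 ?add0r ?(eq_sym v).
Qed.

Lemma Adjl0 (x : 'I_3) u v :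
  Adj (lift x0 x :: v) (x0 :: u) = (gen (lift x0 x) u == v)%:R + (u == v)%:R.
Proof.
by caseI3 x; rewrite /Adj /= !eqseq_cons /= ?addr0 ?add0r addrC (eq_sym v).
Qed.

Lemma Adjll (x y : 'I_3) u v :
  Adj (lift x0 x :: u) (lift x0 y :: v) = ((x == y) && (u == v))%:R *+ 4.
Proof.
caseI3 x; caseI3 y; rewrite /Adj /= ?eqseq_cons /= ?addr0 ?add0r //;
  by rewrite (eq_sym v); case: (u == v).
Qed.

Definition K (n : nat) : nat := #|{: 'I_3 * n.-tuple 'I_4}|.

Definition e2 n (i : 'I_(N n + K n)) : n.+1.-tuple 'I_4 :=
  match split i with
  | inl a => [tuple of x0 :: (enum_val a : n.-tuple 'I_4)]
  | inr b => [tuple of lift x0 (enum_val b : 'I_3 * n.-tuple 'I_4).1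
                       :: (enum_val b : 'I_3 * n.-tuple 'I_4).2]
  end.

Lemma e2_inj n : injective (@e2 n).
Proof.
move=> i j; rewrite /e2 -[i]splitK -[j]splitK !unsplitK.
case: (split i) => a; case: (split j) => b /(congr1 val) /= /eqP;
  rewrite eqseq_cons => /andP [h1 /eqP h2].
- by move: h2 => /val_inj /enum_val_inj ->.
- by rewrite (negbTE (neq_lift _ _)) in h1.
- by rewrite eq_sym (negbTE (neq_lift _ _)) in h1.
- move: h1 => /eqP /lift_inj e; move: h2 => /val_inj e'.
  have : enum_val a = enum_val b by move: e e'; case: (enum_val a); case: (enum_val b) => ? ? ? ? /= -> ->.
  by move=> /enum_val_inj ->.
Qed.

Lemma NE n : N n = (4 ^ n)%N.
Proof. by rewrite /N card_tuple card_ord. Qed.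

Lemma KE n : K n = (3 * 4 ^ n)%N.
Proof. by rewrite /K card_prod card_tuple !card_ord. Qed.

Lemma NS n : N n.+1 = (N n + K n)%N.
Proof. by rewrite NE KE NE expnS mulSn. Qed.

Definition Mf n (u v : n.-tuple 'I_4) : {poly int} :=
  (u == v)%:R * 'X - (Adj u v)%:P.

Lemma charE n : P n = \det (\matrix_(i < N n, j < N n) Mf (enum_val i : n.-tuple 'I_4) (enum_val j : n.-tuple _)).
Proof.
rewrite /P /char_poly AE; congr (\det _); apply/matrixP => i j.
by rewrite /char_poly_mx !mxE /Mf (inj_eq enum_val_inj) mulr_natl.
Qed.

Definition B n : 'M[int]_(N n, K n) := \matrix_(i, j)
  ((gen (lift x0 (enum_val j : 'I_3 * n.-tuple 'I_4).1) (val (enum_val i : n.-tuple 'I_4))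
     == val (enum_val j : 'I_3 * n.-tuple 'I_4).2)%:R
   + (val (enum_val i : n.-tuple 'I_4) == val (enum_val j : 'I_3 * n.-tuple 'I_4).2)%:R).

Lemma tcons n x (t : n.-tuple 'I_4) : val [tuple of x :: t] = x :: val t.
Proof. by []. Qed.

Lemma blockE n : \matrix_(i, j) Mf (@e2 n i) (e2 j)
  = block_mx ('X%:M) (- map_mx polyC (B n)) (- map_mx polyC (B n)^T) (('X - 4%:P)%:M).
Proof.
apply/matrixP => i j; rewrite -[i]splitK -[j]splitK.
case: (split i) => a; case: (split j) => b;
  rewrite [in LHS]mxE /e2 !unsplitK /= ?block_mxEul ?block_mxEur ?block_mxEdl ?block_mxEdr
    !mxE /Mf -val_eqE !tcons eqseq_cons.
- rewrite Adj00 eqxx /= val_eqE (inj_eq enum_val_inj) subr0 mulr_natl //.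
- rewrite Adj0l (negbTE (neq_lift _ _)) /= mul0r sub0r.
  by [].
- by rewrite Adjl0 eq_sym (negbTE (neq_lift _ _)) /= mul0r sub0r.
- rewrite Adjll (inj_eq (@lift_inj _ _)) !val_eqE -xpair_eqE -!surjective_pairing.
  rewrite (inj_eq enum_val_inj); case: (a == b) => /=.
    by rewrite mul1r.
  by rewrite mul0r mul0rn subr0.
Qed.

Lemma liftE (x : 'I_3) : lift x0 x = nth x0 [:: x1; x2; x3] x.
Proof. by caseI3 x. Qed.

Lemma sum_evT (R : nzRingType) (T : finType) (F : T -> R) :
  \sum_(l < #|{: T}|) F (enum_val l) = \sum_w F w.
Proof. by rewrite -(big_enum_val F); apply: eq_bigl. Qed.

Lemma inner n k (u v : n.-tuple 'I_4) : k != x0 ->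
  \sum_(w : n.-tuple 'I_4)
     (((gen k (val u) == val w)%:R + (val u == val w)%:R)
      * ((gen k (val v) == val w)%:R + (val v == val w)%:R) : int)
  = (u == v)%:R *+ 2 + (gen k (val u) == val v)%:R + (gen k (val v) == val u)%:R.
Proof.
move=> k0.
under eq_bigr => w _ do rewrite !gtE !val_eqE mulrDl !mulrDr.
rewrite !big_split /= !sum_delta !(inj_eq (gt_inj k0)) !gtE.
rewrite (eq_sym v u) (eq_sym v (gt k u)) mulr2n.
ring.
Qed.

Lemma BBt n : B n *m (B n)^T = 6%:M + A n.
Proof.
apply/matrixP => i j; rewrite AE !mxE.
under eq_bigr => l _ do rewrite !mxE.
rewrite (sum_evT (fun p : 'I_3 * n.-tuple 'I_4 =>
   ((gen (lift x0 p.1) (val (enum_val i : n.-tuple 'I_4)) == val p.2)%:R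
    + (val (enum_val i : n.-tuple 'I_4) == val p.2)%:R)
 * ((gen (lift x0 p.1) (val (enum_val j : n.-tuple 'I_4)) == val p.2)%:R
    + (val (enum_val j : n.-tuple 'I_4) == val p.2)%:R))).
rewrite -(pair_bigA _ (fun (x : 'I_3) (w : n.-tuple 'I_4) =>
   ((gen (lift x0 x) (val (enum_val i : n.-tuple 'I_4)) == val w)%:R
    + (val (enum_val i : n.-tuple 'I_4) == val w)%:R)
 * ((gen (lift x0 x) (val (enum_val j : n.-tuple 'I_4)) == val w)%:R
    + (val (enum_val j : n.-tuple 'I_4) == val w)%:R))) /=.
under eq_bigr => x _ do rewrite inner ?(negbT (neq_lift _ _)) 1?eq_sym ?neq_lift //.
rewrite !big_ord_recr big_ord0 /= (inj_eq enum_val_inj) !liftE /= /Adj.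
rewrite (eq_sym j i) -mulr_natl; ring.
Qed.


Lemma E3 m (M : 'M[int]_m) :
  ('X * ('X - 4%:P))%:M - ((6%:P)%:M + map_mx polyC M)
  = map_mx (comp_poly f) (char_poly_mx M).
Proof.
apply/matrixP => i j; rewrite !mxE; case: (i == j) => /=;
  rewrite ?mulr1n ?mulr0n ?comp_polyB ?comp_polyX ?comp_polyC ?comp_poly0 /f.
  ring.
by rewrite polyC0; ring.
Qed.

Lemma Prec n : P n.+1 = (P n \Po f) * ('X - 4%:P) ^+ (2 * 4 ^ n).
Proof.
have H := schur 'X ('X - 4%:P) (map_mx polyC (B n)).
rewrite !map_trmx -blockE in H.
have E1 : P n.+1 = \det (\matrix_(i, j) Mf (@e2 n i) (e2 j)).
  rewrite charE; apply: (det_reindex (@Mf n.+1) (NS n)) => //.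
    exact: enum_val_inj.
  exact: e2_inj.
rewrite -E1 -map_mxM BBt map_mxD map_scalar_mx /= in H.
have E3 := E3 (A n).
rewrite E3 det_map_mx /= -/(char_poly _) -/(P n) KE NE in H.
have d0 : ('X - 4%:P) ^+ (4 ^ n) != 0 :> {poly int} by rewrite expf_neq0 // polyXsubC_eq0.
apply: (mulIf d0); rewrite H -mulrA -exprD; congr (_ * _ ^+ _).
by rewrite mulSn addnC.
Qed.

Lemma P0 : P 0 = 'X - 6%:P.
Proof.
rewrite charE (det_reindex (@Mf 0) (NE 0 : N 0 = 1%N) (e1 := enum_val)
   (e2 := fun _ : 'I_1 => [tuple])) //.
- by rewrite det_mx11 mxE /Mf eqxx mul1r.
- exact: enum_val_inj.
- by move=> i j _; rewrite !ord1.
Qed.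


Lemma f_Po p : f \Po p = p ^+ 2 - 4%:P * p - 6%:P.
Proof. by rewrite /f !comp_polyB !comp_polyM !comp_polyC comp_polyX expr2. Qed.

Lemma fiter_comp i q : fiter i \Po q = iter i (fun p => f \Po p) q.
Proof.
elim: i => [|i IH]; first by rewrite /fiter /= comp_polyX.
by rewrite /fiter /= -comp_polyA -/(fiter i) IH.
Qed.

Lemma fiterSr i : fiter i.+1 = fiter i \Po f.
Proof. by rewrite fiter_comp /fiter iterSr /= comp_polyXr. Qed.

Lemma fm6 n : fiter n - 6%:P = ('X - 6%:P) * \prod_(i < n) (fiter i + 2%:P).
Proof.
elim: n => [|n IH]; first by rewrite big_ord0 mulr1.
rewrite big_ord_recr /= mulrA -IH /fiter /= -/(fiter n) f_Po.
rewrite !polyC_natr; ring.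
Qed.

Lemma closed n : P n = (fiter n - 6%:P) * \prod_(i < n) (fiter i - 4%:P) ^+ (2 * 4 ^ (n - i - 1)).
Proof.
elim: n => [|n IH]; first by rewrite P0 big_ord0 mulr1.
rewrite Prec IH rmorphM rmorph_prod /= big_ord_recl /= subn1 subn0 /=.
rewrite comp_polyB comp_polyC -fiterSr.
under eq_bigr => i _ do rewrite rmorphXn /= comp_polyB comp_polyC -fiterSr.
under [in RHS]eq_bigr => i _ do rewrite subSS.
rewrite /fiter /=; ring.
Qed.

Definition g i : {poly algC} := map_poly intr (fiter i).
Definition F (y : algC) := y ^+ 2 - 4 * y - 6.
Definition Fz (z : int) := z ^+ 2 - 4 * z - 6.

Lemma gS i : g i.+1 = g i ^+ 2 - 4%:P * g i - 6%:P.
Proof.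
rewrite /g /fiter /= -/(fiter i) f_Po !rmorphB !rmorphM /= !map_polyC /= !rmorph_nat expr2.
by [].
Qed.

Lemma g0 : g 0 = 'X.
Proof. by rewrite /g /fiter /= map_polyX. Qed.

Lemma gval i lam : (g i.+1).[lam] = F (g i).[lam].
Proof. by rewrite gS /F !hornerE. Qed.

Lemma giter i k lam : (g (k + i)).[lam] = iter k F (g i).[lam].
Proof. by elim: k => [|k IH] //=; rewrite gval IH. Qed.

Lemma Fint k (z : int) : iter k F (z%:~R) = (iter k Fz z)%:~R.
Proof.
elim: k => [|k IH] //=; rewrite IH /F /Fz.
by rewrite !rmorphB !rmorphM !rmorph_nat.
Qed.

Lemma orbit2 k : (0 < k)%N -> iter k Fz 2 = -10 \/ 6 < iter k Fz 2.
Proof.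
elim: k => [//|[|k] IH _]; first by left.
right; rewrite iterS; move: (IH isT); move: (iter k.+1 Fz 2) => z [->|hz].
  by rewrite /Fz.
rewrite /Fz; nia.
Qed.

Lemma not_root i j lam : (j < i)%N -> (g j).[lam] = 2 ->
  (g i).[lam] != -2 /\ (g i).[lam] != 4.
Proof.
move=> ji h; have e : i = ((i - j) + j)%N by rewrite subnK // ltnW.
have k0 : (0 < i - j)%N by rewrite subn_gt0.
rewrite e giter h (_ : 2 = (2%:Z)%:~R) // Fint.
rewrite (_ : -2 = (-2)%:~R) // (_ : 4 = (4%:Z)%:~R) // !eqr_int.
by case: (orbit2 k0) => [->|]; split => //; apply/negP => /eqP E; rewrite E in b.
Qed.

Lemma dg i : (g i.+1)^`() = (g i *+ 2 - 4%:P) * (g i)^`().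
Proof.
rewrite gS !derivB derivC subr0 expr2 !derivM derivC mul0r add0r.
rewrite mulrBl mulrnAl; ring.
Qed.

Lemma dnz i lam : (forall j, (j < i)%N -> (g j).[lam] != 2) -> (g i)^`().[lam] != 0.
Proof.
elim: i => [|i IH] h; first by rewrite g0 derivX hornerC oner_neq0.
rewrite dg hornerM mulf_neq0 //; last by apply: IH => j ji; apply: h; rewrite ltnS ltnW.
rewrite !hornerE.
have : (g i).[lam] != 2 by apply: h.
apply: contra => /eqP H; apply/eqP.
have : ((g i).[lam] - 2) *+ 2 = 0 by rewrite -H; ring.
by move/eqP; rewrite mulrn_eq0 /= subr_eq0 => /eqP.
Qed.

Lemma mup_simple (p : {poly algC}) x : root p x -> p^`().[x] != 0 -> mup x p = 1%N.
Proof.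
move=> r d.
have p0 : p != 0 by apply: contraNneq d => ->; rewrite deriv0 horner0.
apply/eqP; rewrite eqn_leq mup_leq // (mup_geq _ _ p0) expr1 dvdp_XsubCl r andbT.
apply/negP => /dvdpP [q E]; move: d; rewrite E.
rewrite expr2 !derivM !(hornerD, hornerM, hornerN, hornerX, hornerC) subrr; apply/negP.
by apply/negPn/eqP; ring.
Qed.

Lemma g6 i : (g i).[6] = 6.
Proof. elim: i => [|i IH]; first by rewrite g0 hornerX. by rewrite gval IH /F; ring. Qed.

Lemma neq0_at (p : {poly algC}) x : p.[x] != 0 -> p != 0.
Proof. by apply: contraNneq => ->; rewrite horner0. Qed.

Lemma g2_neq0 i : g i + 2%:P != 0.
Proof.
apply: (@neq0_at _ 6); rewrite hornerD hornerC g6.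
by rewrite (_ : (6 + 2 : algC) = 8%:R) ?pnatr_eq0 //; ring.
Qed.

Lemma g4_neq0 i : g i - 4%:P != 0.
Proof.
apply: (@neq0_at _ 6); rewrite hornerD hornerN hornerC g6.
by rewrite (_ : (6 - 4 : algC) = 2%:R) ?pnatr_eq0 //; ring.
Qed.

Lemma mup_g2 i lam : mup lam (g i + 2%:P) = ((g i).[lam] == -2 : nat).
Proof.
case: eqP => h /=.
- apply: mup_simple.
    by rewrite /root hornerD hornerC h addNr.
  rewrite derivD derivC addr0; apply: dnz => j ji; apply/eqP => hj.
  by have [] := not_root ji hj; rewrite h eqxx.
- apply: mupNroot; rewrite /root hornerD hornerC addr_eq0; exact/eqP.
Qed.

Lemma mup_pow (p : {poly algC}) x e : p != 0 -> mup x (p ^+ e) = (e * mup x p)%N.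
Proof.
move=> p0; elim: e => [|e IH]; first by rewrite expr0 mupNroot // root1.
by rewrite exprS mupM ?expf_neq0 // IH mulSn.
Qed.

Lemma mup_g4 i lam e : mup lam ((g i - 4%:P) ^+ e) = (((g i).[lam] == 4%R) * e)%N.
Proof.
rewrite mup_pow ?g4_neq0 // mulnC; congr (_ * _)%N.
case: eqP => h /=.
- apply: mup_simple.
    by rewrite /root hornerD hornerN hornerC h subrr.
  rewrite derivB derivC subr0; apply: dnz => j ji; apply/eqP => hj.
  by have [] := not_root ji hj; rewrite h eqxx.
- apply: mupNroot; rewrite /root hornerD hornerN hornerC subr_eq0; exact/eqP.
Qed.

Lemma mup_prod n (Fp : nat -> {poly algC}) x : (forall i, Fp i != 0) ->
  mup x (\prod_(i < n) Fp i) = (\sum_(i < n) mup x (Fp i))%N.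
Proof.
move=> h; elim: n => [|n IH]; first by rewrite !big_ord0 mupNroot // root1.
rewrite !big_ord_recr /= mupM ?IH //; apply/prodf_neq0 => j _; exact: h.
Qed.

Theorem theorem3p4 (n : nat) : (1 <= n)%N ->
  P n = ('X - 6%:P) * (\prod_(i < n) (fiter i + 2%:P))
        * (\prod_(i < n) (fiter i - 4%:P) ^+ (2 * 4 ^ (n - i - 1))%N)
  /\
  (forall lam : algC,
     mup lam (map_poly intr (P n)) =
       ((lam == 6%R) : nat)
       + \sum_(i < n) (((map_poly intr (fiter i)).[lam] == (-2)%R) : nat)
       + \sum_(i < n) (((map_poly intr (fiter i)).[lam] == 4%R) * (2 * 4 ^ (n - i - 1)))%N)%N.
Proof.
move=> _.
have E : P n = ('X - 6%:P) * (\prod_(i < n) (fiter i + 2%:P))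
        * (\prod_(i < n) (fiter i - 4%:P) ^+ (2 * 4 ^ (n - i - 1))%N).
  by rewrite closed fm6.
split => // lam.
rewrite E !rmorphM !rmorph_prod /=.
have M2 (i : 'I_n) : map_poly intr (fiter i + 2%:P) = g i + 2%:P :> {poly algC}.
  by rewrite rmorphD /= map_polyC /= rmorph_nat.
have M4 (i : 'I_n) : map_poly intr ((fiter i - 4%:P) ^+ (2 * 4 ^ (n - i - 1)))
    = (g i - 4%:P) ^+ (2 * 4 ^ (n - i - 1)) :> {poly algC}.
  by rewrite rmorphXn rmorphB /= map_polyC /= rmorph_nat.
rewrite (eq_bigr _ (fun i _ => M2 i)) (eq_bigr _ (fun i _ => M4 i)).
have M6 : map_poly intr ('X - 6%:P) = 'X - 6%:P :> {poly algC}.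
  by rewrite rmorphB /= map_polyX map_polyC rmorph_nat.
rewrite M6.
have n1 : ('X - 6%:P : {poly algC}) != 0 by rewrite polyXsubC_eq0.
have n2 : \prod_(i < n) (g i + 2%:P) != 0 by apply/prodf_neq0 => i _; exact: g2_neq0.
have n3 : \prod_(i < n) (g i - 4%:P) ^+ (2 * 4 ^ (n - i - 1)) != 0.
  by apply/prodf_neq0 => i _; rewrite expf_neq0 // g4_neq0.
rewrite !mupM ?mulf_neq0 //.
rewrite -(expr1 ('X - 6%:P)) mup_XsubCX.
rewrite (@mup_prod n (fun i => g i + 2%:P)); last exact: g2_neq0.
rewrite (@mup_prod n (fun i => (g i - 4%:P) ^+ (2 * 4 ^ (n - i - 1)))); last first.
  by move=> i; rewrite expf_neq0 // g4_neq0.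
rewrite (eq_bigr _ (fun (i : 'I_n) _ => mup_g2 i lam)).
rewrite (eq_bigr _ (fun (i : 'I_n) _ => mup_g4 i lam _)).
by rewrite eq_sym; case: (lam == 6).
Qed.
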